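(* Let $\Gamma=(V,E)$ be a reflexive finite $k$-separable graph such that $\Gamma^-$ is not $k$-faithful. Then: (i) the intersection of two distinct $k$-super-fragments of $\Gamma$ has cardinality less than $k$; (ii) moreover, if $k\ge 2$ and $\kappa_k(\Gamma)=\kappa_{k-1}(\Gamma)$, then the intersection of two distinct $k$-super-fragments of $\Gamma$ has cardinality less than $k-1$.
   Context: A graph is a pair $\Gamma=(V,E)$ with $E\subseteq V\times V$; finite means $V$ finite; reflexive means $(x,x)\in E$ for all $x$. $\Gamma(x)=\{y:(x,y)\in E\}$, $\Gamma(X)=\bigcup_{x\in X}\Gamma(x)$; the reverse graph is $\Gamma^-=(V,E^-)$, $E^-=\{(x,y):(y,x)\in E\}$. $\partial(X)=\Gamma(X)\setminus X$, $\nabla(X)=V\setminus\Gamma(X)$. $\Gamma$ is $k$-separable if there is a finite $X$ with $|X|\ge k$, $|\nabla(X)|\ge k$; then $\kappa_k(\Gamma)=\min\{|\partial(X)|: |X|\ge k,|\nabla(X)|\ge k\}$. A $k$-fragment is a set $X$ with $|X|\ge k$, $|\nabla(X)|\ge k$, $|\partial(X)|=\kappa_k(\Gamma)$; a $k$-atom is a $k$-fragment of minimum cardinality; a $k$-super-fragment is a $k$-fragment of maximum cardinality. A graph is $k$-faithful if $|A|\le|\nabla(A)|$ for a $k$-atom $A$ (all $k$-atoms have the same cardinality); the same notions for $\Gamma^-$ use $\Gamma^-$ in place of $\Gamma$. *)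

(* Defs.v *)
From mathcomp Require Import all_boot.
Set Implicit Arguments. Unset Strict Implicit. Unset Printing Implicit Defensive.

Section Graphs.
Variables (V : finType) (E : rel V).

Definition nbh (X : {set V}) : {set V} := [set y | [exists x in X, E x y]].
Definition bnd (X : {set V}) : {set V} := nbh X :\: X.
Definition nab (X : {set V}) : {set V} := ~: nbh X.

Definition kcand (k : nat) (X : {set V}) : bool := (k <= #|X|) && (k <= #|nab X|).

Definition separable (k : nat) : Prop := exists X : {set V}, kcand k X.

(* kappa_k = min { |d(X)| : |X| >= k, |nabla X| >= k }  (meaningful when separable;
   #|V| is a harmless default since |d(X)| <= |V|) *)
Definition kappa (k : nat) : nat := \big[minn/#|V|]_(X : {set V} | kcand k X) #|bnd X|.

Definition fragment (k : nat) (X : {set V}) : bool := kcand k X && (#|bnd X| == kappa k).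

Definition atom (k : nat) (A : {set V}) : Prop :=
  fragment k A /\ forall X : {set V}, fragment k X -> #|A| <= #|X|.

Definition superfragment (k : nat) (S : {set V}) : Prop :=
  fragment k S /\ forall X : {set V}, fragment k X -> #|X| <= #|S|.

(* k-faithful: |A| <= |nabla(A)| for a k-atom A (all k-atoms have equal size) *)
Definition faithful (k : nat) : Prop :=
  separable k /\ exists A : {set V}, atom k A /\ #|A| <= #|nab A|.

End Graphs.

Definition revrel (V : finType) (E : rel V) : rel V := fun x y => E y x.

(* Main.v *)
Require Import Defs.
From mathcomp Require Import all_boot.
From mathcomp Require Import zify.
Set Implicit Arguments. Unset Strict Implicit.

Section L.
Variables (V : finType) (E : rel V).

Lemma nbh_sub (X : {set V}) : (forall x, E x x) -> X \subset nbh E X.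
Proof. move=> r; apply/subsetP=> x xX; rewrite inE; apply/existsP; exists x; by rewrite xX r. Qed.

Lemma nbh_mono (X Y : {set V}) : X \subset Y -> nbh E X \subset nbh E Y.
Proof.
move=> /subsetP s; apply/subsetP=> y; rewrite !inE => /existsP[x /andP[xX e]].
apply/existsP; exists x; by rewrite s.
Qed.

Lemma nab_mono (X Y : {set V}) : X \subset Y -> #|nab E Y| <= #|nab E X|.
Proof. move=> s; apply: subset_leq_card; rewrite setCS; exact: nbh_mono. Qed.

Lemma card_nbh (X : {set V}) : (forall x, E x x) -> #|X| + #|bnd E X| = #|nbh E X|.
Proof.
move=> r; have := cardsID X (nbh E X).
by rewrite (setIidPr (nbh_sub X r)) /bnd.
Qed.

Lemma card_part (X : {set V}) : (forall x, E x x) ->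
  #|X| + #|bnd E X| + #|nab E X| = #|V|.
Proof. move=> r; by rewrite card_nbh // /nab cardsC. Qed.

Lemma nbhU (X Y : {set V}) : nbh E (X :|: Y) = nbh E X :|: nbh E Y.
Proof.
apply/setP=> y; rewrite !inE; apply/existsP/orP.
- case=> x /andP[]; rewrite inE => /orP[] xX e; [left|right]; apply/existsP; exists x; by rewrite xX.
- case=> /existsP[x /andP[xX e]]; exists x; by rewrite inE xX ?orbT.
Qed.

Lemma submod (X Y : {set V}) : (forall x, E x x) ->
  #|bnd E (X :&: Y)| + #|bnd E (X :|: Y)| <= #|bnd E X| + #|bnd E Y|.
Proof.
move=> r.
have h1 := card_nbh (X :&: Y) r. have h2 := card_nbh (X :|: Y) r.
have h3 := card_nbh X r. have h4 := card_nbh Y r.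
have h5 := cardsUI X Y. have h6 := cardsUI (nbh E X) (nbh E Y).
have h7 : #|nbh E (X :&: Y)| <= #|nbh E X :&: nbh E Y|.
  apply: subset_leq_card; rewrite subsetI; apply/andP; split; apply: nbh_mono;
  [exact: subsetIl | exact: subsetIr].
rewrite nbhU in h2. lia.
Qed.

Lemma bigmin_le_seq (I : eqType) (r : seq I) (P : pred I) (F : I -> nat) x0 j :
  j \in r -> P j -> \big[minn/x0]_(i <- r | P i) F i <= F j.
Proof.
elim: r => [|a r IH] //; rewrite inE big_cons => /orP[/eqP <-|jr] Pj.
- by rewrite Pj geq_minl.
- case: (P a); last exact: IH.
  apply: leq_trans (geq_minr _ _) _; exact: IH.
Qed.

Lemma kappa_le k (X : {set V}) : kcand E k X -> kappa E k <= #|bnd E X|.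
Proof. move=> c; rewrite /kappa; apply: bigmin_le_seq => //; by rewrite mem_index_enum. Qed.

Lemma kappa_att k : separable E k -> exists X, fragment E k X.
Proof.
case=> X0 c0.
have : (kappa E k = #|V|) \/ exists X, kcand E k X /\ #|bnd E X| = kappa E k.
  rewrite /kappa; apply: (big_ind (fun m => (m = #|V|) \/ exists X, kcand E k X /\ #|bnd E X| = m)).
  - by left.
  - move=> a b ha hb /=; case: (leqP a b) => ab.
    + exact: ha.
    + exact: hb.
  - move=> X c; right; by exists X.
case=> [h|[X [c h]]]; last by exists X; rewrite /fragment c h eqxx.
exists X0; rewrite /fragment c0 /=; apply/eqP/anti_leq.
rewrite kappa_le // h andbT; exact: max_card.
Qed.

Lemma frag_of k (X : {set V}) : kcand E k X -> #|bnd E X| <= kappa E k -> fragment E k X.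
Proof. move=> c h; by rewrite /fragment c eqn_leq h kappa_le. Qed.

Lemma dual1 (X : {set V}) : X \subset nab (revrel E) (nab E X).
Proof.
apply/subsetP=> x xX; rewrite !inE; apply/negP=> /existsP[y /andP[]].
rewrite !inE => /negP ny e; apply: ny; apply/existsP; exists x; by rewrite xX.
Qed.

Lemma dual2 (X : {set V}) : bnd (revrel E) (nab E X) \subset bnd E X.
Proof.
apply/subsetP=> z; rewrite /bnd inE => /andP[nz zn].
rewrite /nab inE negbK in nz; rewrite inE nz andbT.
apply/negP=> zX.
have := subsetP (dual1 X) z zX; by rewrite /nab inE zn.
Qed.

End L.

Lemma revrevE (V : finType) (E : rel V) : revrel (revrel E) = E.
Proof. by []. Qed.

Lemma kappa_rev (V : finType) (E : rel V) k : separable E k ->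
  separable (revrel E) k /\ kappa (revrel E) k = kappa E k.
Proof.
move=> s; have [X] := kappa_att s; case/andP => /andP[c1 c2] /eqP hX.
have cY : kcand (revrel E) k (nab E X).
  rewrite /kcand c2 /=; apply: leq_trans c1 _; apply: subset_leq_card; exact: dual1.
split; first by exists (nab E X).
have [Y] := kappa_att (ex_intro (fun Z => kcand (revrel E) k Z) _ cY); case/andP => /andP[d1 d2] /eqP hY.
have cX : kcand E k (nab (revrel E) Y).
  rewrite /kcand d2 /=; apply: leq_trans d1 _; apply: subset_leq_card.
  have := @dual1 V (revrel E) Y; by rewrite revrevE.
apply/anti_leq/andP; split.
- apply: leq_trans (kappa_le cY) _; rewrite -hX; apply: subset_leq_card; exact: dual2.
- apply: leq_trans (kappa_le cX) _; rewrite -hY; apply: subset_leq_card.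
  have := @dual2 V (revrel E) Y; by rewrite revrevE.
Qed.

Lemma super_lt (V : finType) (E : rel V) k (S : {set V}) :
  (forall x : V, E x x) -> ~ faithful (revrel E) k ->
  superfragment E k S -> #|S| < #|nab E S|.
Proof.
move=> r nf [fS supS].
have rr : forall x : V, revrel E x x by [].
case/andP: (fS) => /andP[c1 c2] /eqP bS.
have sE : separable E k by exists S; rewrite /kcand c1 c2.
have [sR kR] := kappa_rev sE.
set T := nab E S.
have cT : kcand (revrel E) k T.
  rewrite /kcand c2 /=; apply: leq_trans c1 _; apply: subset_leq_card; exact: dual1.
have bT : #|bnd (revrel E) T| <= #|bnd E S| by apply: subset_leq_card; exact: dual2.
have fT : fragment (revrel E) k T by apply: frag_of => //; rewrite kR -bS.
have pS := card_part S r. have pT := card_part T rr. rewrite -/T in pS.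
have aT : atom (revrel E) k T.
  split=> // Y /andP[/andP[d1 d2] /eqP bY].
  set X := nab (revrel E) Y.
  have cX : kcand E k X.
    rewrite /kcand d2 /=; apply: leq_trans d1 _; apply: subset_leq_card.
    have := @dual1 V (revrel E) Y; by rewrite revrevE.
  have bX : #|bnd E X| <= #|bnd (revrel E) Y|.
    apply: subset_leq_card; have := @dual2 V (revrel E) Y; by rewrite revrevE.
  have fX : fragment E k X by apply: frag_of => //; rewrite -kR -bY.
  have := supS X fX. have pY := card_part Y rr.
  case/andP: (fT) => _ /eqP bT'. rewrite -/X in pY. clearbody X T. lia.
have : ~~ (#|T| <= #|nab (revrel E) T|).
  apply/negP=> h; apply: nf; split => //; by exists T.
rewrite -ltnNge; case/andP: (fT) => _ /eqP bT'. clearbody T. lia.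
Qed.

Lemma core (V : finType) (E : rel V) k (S1 S2 : {set V}) :
  (forall x : V, E x x) -> ~ faithful (revrel E) k ->
  superfragment E k S1 -> superfragment E k S2 -> S1 != S2 ->
  kappa E k <= #|bnd E (S1 :&: S2)| -> (#|S1 :&: S2|).+2 <= k.
Proof.
move=> r nf sp1 sp2 ne hI.
have l1 := super_lt r nf sp1.
case: sp1 => f1 m1; case: sp2 => f2 m2.
have e12 : #|S1| = #|S2| by apply/anti_leq; rewrite m1 // m2.
case/andP: (f1) => /andP[a1 b1] /eqP k1.
case/andP: (f2) => /andP[a2 b2] /eqP k2.
have sm := submod S1 S2 r.
have hU : #|bnd E (S1 :|: S2)| <= kappa E k by lia.
have hIlt : #|S1 :&: S2| < #|S1|.
  rewrite ltn_neqAle subset_leq_card ?subsetIl // andbT.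
  apply/negP=> /eqP h; move/negP: ne; apply; apply/eqP.
  have h1 : S1 :&: S2 = S1 by apply/eqP; rewrite eqEcard subsetIl h leqnn.
  have sub : S1 \subset S2 by rewrite -h1 subsetIr.
  by apply/eqP; rewrite eqEcard sub e12 leqnn.
have uI := cardsUI S1 S2.
case: (leqP k #|nab E (S1 :|: S2)|) => hk.
- have cU : kcand E k (S1 :|: S2).
    rewrite /kcand hk andbT; apply: leq_trans a1 _; apply: subset_leq_card; exact: subsetUl.
  have := m1 _ (frag_of cU hU). lia.
- have p1 := card_part S1 r. have pU := card_part (S1 :|: S2) r. lia.
Qed.

Theorem theorem4p3 (V : finType) (E : rel V) (k : nat) :
  (forall x : V, E x x) ->
  separable E k ->
  ~ faithful (revrel E) k ->
  (forall S1 S2 : {set V},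
     superfragment E k S1 -> superfragment E k S2 -> S1 != S2 ->
     #|S1 :&: S2| < k)
  /\
  (2 <= k -> kappa E k = kappa E k.-1 ->
   forall S1 S2 : {set V},
     superfragment E k S1 -> superfragment E k S2 -> S1 != S2 ->
     #|S1 :&: S2| < k.-1).
Proof.
move=> r sep nf; split.
- move=> S1 S2 sp1 sp2 ne; rewrite ltnNge; apply/negP=> h.
  have := core r nf sp1 sp2 ne.
  case: (sp1) => [/andP[/andP[a1 b1] _] _].
  have cI : kcand E k (S1 :&: S2).
    rewrite /kcand h /=; apply: leq_trans b1 _; apply: nab_mono; exact: subsetIl.
  move/(_ (kappa_le cI)). lia.
- move=> k2 kk S1 S2 sp1 sp2 ne; rewrite ltnNge; apply/negP=> h.
  have := core r nf sp1 sp2 ne.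
  case: (sp1) => [/andP[/andP[a1 b1] _] _].
  have cI : kcand E k.-1 (S1 :&: S2).
    rewrite /kcand h /=; apply: leq_trans (leq_pred k) _; apply: leq_trans b1 _;
    apply: nab_mono; exact: subsetIl.
  rewrite kk; move/(_ (kappa_le cI)). lia.
Qed.
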